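(* Let $F$ be a formally real field, $(D,\bar{\ })$ an $F$-division algebra with involution, $n\in\mathbb{N}$, and $(A,\sigma)=(M_n(D),\bar{\ }^t)$. Let $a\in\operatorname{Sym}(D,\bar{\ })^\times$ and let $h_1,h_2\in\mathscr F_a$ be such that $[h_1\boxtimes h_2]\in I(A,\sigma)$. Then $[h_1]\in I(A,\sigma)$ or $[h_2]\in I(A,\sigma)$.
   Context: $(D,\bar{\ })$ is a division algebra with involution such that $(M_n(D),\bar{\ }^t)$ (conjugate transpose) is an $F$-algebra with involution (finite-dimensional, centre of degree $\le2$ over $F$, $F$-linear involution). $W(A,\sigma)$ is the Witt group of non-singular hermitian forms over $(A,\sigma)$ on finitely generated right $A$-modules; $[h]$ denotes the Witt class of a form $h$. Every finitely generated right $A$-module is isomorphic to $(D^n)^k$ for a unique $k$, the rank of a form on it; the parity of the rank is a Witt class invariant, and $I(A,\sigma)$ is the subgroup of classes of forms of even rank. $\operatorname{Sym}(D,\bar{\ })^\times$ is the set of invertible $a\in D$ with $\bar a=a$. For such $a$, $h_a:D^n\times D^n\to M_n(D)$, $h_a(x,y)=\bar x^tay$ ($x,y$ viewed as $1\times n$ row vectors), a hermitian form of rank one over $(A,\sigma)$. $\mathscr F_a=\{h_{a^{i_1}}\perp\cdots\perp h_{a^{i_\ell}}\mid \ell\in\mathbb{N},\ i_1,\ldots,i_\ell\in\mathbb{N}_0\}$ ($\perp$ orthogonal sum), and for $h_1=h_{a^{i_1}}\perp\cdots\perp h_{a^{i_k}}$, $h_2=h_{a^{j_1}}\perp\cdots\perp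 h_{a^{j_\ell}}$ in $\mathscr F_a$, $h_1\boxtimes h_2=\perp_{p=1}^k\perp_{q=1}^\ell h_{a^{i_p+j_q}}$. *)

(* Defs.v *)
From HB Require Import structures.
From mathcomp Require Import all_boot all_order all_algebra.
From mathcomp Require Import falgebra.
Set Implicit Arguments. Unset Strict Implicit. Unset Printing Implicit Defensive.
Import Order.TTheory GRing.Theory Num.Theory.
Local Open Scope ring_scope.

Definition formally_real (F : fieldType) : Prop :=
  forall s : seq F, \sum_(x <- s) x ^+ 2 != -1.

Definition division_algebra_with_involution (F : fieldType) (D : falgType F)
  (bar : D -> D) : Prop :=
  [/\ forall x : D, x != 0 -> x \is a GRing.unit,
      (\dim ('Z(fullv : {vspace D}))%VS <= 2)%N,
      (forall x y, bar (x + y) = bar x + bar y) /\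
      (forall x y, bar (x * y) = bar y * bar x),
      (forall x, bar (bar x) = x)
    & (forall (c : F) x, bar (c *: x) = c *: bar x)].

Section Forms.
Variables (F : fieldType) (D : falgType F) (bar : D -> D) (n : nat).

Definition ct p q (A : 'M[D]_(p, q)) : 'M[D]_(q, p) := (map_mx bar A)^T.

(* A (sesquilinear) form over (M_n(D), bar^t) on the right module (D^n)^k,
   whose elements are k x n matrices (k rows in D^n); k is the rank. *)
Record hform := HForm { hrank : nat;
  hfun : 'M[D]_(hrank, n) -> 'M[D]_(hrank, n) -> 'M[D]_n }.
Arguments hfun : clear implicits.
Arguments hfun h _ _.

Definition is_sesquilinear (h : hform) : Prop :=
  [/\ forall x1 x2 y, hfun h (x1 + x2) y = hfun h x1 y + hfun h x2 y,
      forall x y1 y2, hfun h x (y1 + y2) = hfun h x y1 + hfun h x y2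
    & forall x y (a b : 'M[D]_n),
        hfun h (x *m a) (y *m b) = ct a *m hfun h x y *m b].

Definition is_hermitian (h : hform) : Prop :=
  forall x y, hfun h y x = ct (hfun h x y).

Definition rlinear k m (f : 'M[D]_(k, n) -> 'M[D]_(m, n)) : Prop :=
  (forall x y, f (x + y) = f x + f y) /\ (forall x a, f (x *m a) = f x *m a).

Definition is_nonsingular (h : hform) : Prop :=
  forall f : 'M[D]_(hrank h, n) -> 'M[D]_n, rlinear f ->
    exists! x, forall y, hfun h x y = f y.

Definition nsh_form (h : hform) : Prop :=
  [/\ is_sesquilinear h, is_hermitian h & is_nonsingular h].

Definition ortho (h1 h2 : hform) : hform :=
  @HForm (hrank h1 + hrank h2) (fun x y =>
    hfun h1 (usubmx x) (usubmx y) + hfun h2 (dsubmx x) (dsubmx y)).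

Definition hyp (m : nat) : hform :=
  @HForm (m + m) (fun x y => ct (usubmx x) *m dsubmx y + ct (dsubmx x) *m usubmx y).

Definition isometric (h1 h2 : hform) : Prop :=
  exists g : 'M[D]_(hrank h1, n) -> 'M[D]_(hrank h2, n),
    [/\ bijective g, rlinear g & forall x y, hfun h2 (g x) (g y) = hfun h1 x y].

Definition witt_equiv (h1 h2 : hform) : Prop :=
  exists m1 m2, isometric (ortho h1 (hyp m1)) (ortho h2 (hyp m2)).

Definition in_I (h : hform) : Prop :=
  exists h', [/\ nsh_form h', ~~ odd (hrank h') & witt_equiv h h'].

Definition hc (c : D) : hform :=
  @HForm 1 (fun x y => ct x *m (c *: y)).

Fixpoint famF (a : D) (i : nat) (s : seq nat) : hform :=
  match s with
  | [::] => hc (a ^+ i)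
  | j :: s' => ortho (hc (a ^+ i)) (famF a j s')
  end.

(* h1 boxtimes h2 for h1 = famF a i1 s1, h2 = famF a i2 s2 *)
Definition boxF (a : D) (i1 : nat) (s1 : seq nat) (i2 : nat) (s2 : seq nat)
  : hform :=
  let p := [seq x + y | x <- i1 :: s1, y <- i2 :: s2] in
  famF a (head 0%N p) (behead p).

End Forms.

(* Main.v *)
Require Import Defs.
From HB Require Import structures.
From mathcomp Require Import all_boot all_order all_algebra falgebra.
Import GRing.Theory.
Open Scope ring_scope.
Lemma inj_dim (K : fieldType) (V W : vectType K) (f : V -> W) :
  (forall x y, f (x + y) = f x + f y) -> (forall (c : K) x, f (c *: x) = c *: f x) ->
  injective f -> (dim V <= dim W)%N.
Proof.
move=> fD fZ finj.
have fl : linear f by move=> c x y; rewrite fD fZ.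
pose fL : {linear V -> W} := HB.pack f (GRing.isLinear.Build K V W *:%R f fl).
pose L := linfun fL.
have kerL : lker L == 0%VS by apply/lker0P => x y; rewrite !lfunE; apply: finj.
rewrite -!dimvf -(limg_dim_eq (U:=fullv) (f:=L)); last by rewrite (eqP kerL) capv0.
by apply: dimvS; apply: subvf.
Qed.

Section Rank.
Variables (F : fieldType) (D : falgType F) (n : nat).

Lemma mulmx_scalarE k (A : 'M[D]_(k, n)) (b : D) i j :
  (A *m b%:M) i j = A i j * b.
Proof.
rewrite !mxE (bigD1 j) //= big1 ?addr0; first by rewrite mxE eqxx mulr1n.
by move=> l /negPf nlj; rewrite mxE nlj mulr0n mulr0.
Qed.

Definition enc k (A : 'M[D]_(k, n)) : {ffun 'I_k * 'I_n -> D} :=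
  [ffun ij => A ij.1 ij.2].
Definition dec k (f : {ffun 'I_k * 'I_n -> D}) : 'M[D]_(k, n) :=
  \matrix_(i, j) f (i, j).
Arguments enc {k}.
Arguments dec {k}.
Lemma encK k : cancel (@enc k) (@dec k).
Proof. by move=> A; apply/matrixP=> i j; rewrite !mxE ffunE. Qed.
Lemma decK k : cancel (@dec k) (@enc k).
Proof. by move=> f; apply/ffunP=> [[i j]]; rewrite ffunE mxE. Qed.

Lemma dimD_gt0 : (0 < dim D)%N.
Proof. by rewrite -dimvf adim_gt0. Qed.

Lemma rank_le k1 k2 (g : 'M[D]_(k1, n) -> 'M[D]_(k2, n)) :
  (0 < n)%N -> rlinear g -> injective g -> (k1 <= k2)%N.
Proof.
move=> n0 [gD gM] ginj.
pose G := fun f => enc (g (dec f)).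
have scE k (c : F) (f : {ffun 'I_k * 'I_n -> D}) :
    dec (c *: f) = dec f *m (c%:A)%:M.
  apply/matrixP=> i j; rewrite mulmx_scalarE !mxE ffunE.
  by rewrite -[in LHS](mulr1 (f (i, j))) scalerAr.
have : (dim {ffun 'I_k1 * 'I_n -> D} <= dim {ffun 'I_k2 * 'I_n -> D})%N.
  apply: (@inj_dim _ _ _ G).
  - move=> x y; rewrite /G.
    have -> : dec (x + y) = dec x + dec y by apply/matrixP=> i j; rewrite !mxE ffunE.
    by rewrite gD; apply/ffunP=> ij; rewrite !ffunE !mxE.
  - move=> c x; rewrite /G scE gM; apply/ffunP=> ij.
    by rewrite !ffunE mulmx_scalarE -scalerAr mulr1.
  - by rewrite /G => x y /(can_inj (@encK k2)) /ginj /(can_inj (@decK k1)).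
have dE k : dim {ffun 'I_k * 'I_n -> D} = (#|{: 'I_k * 'I_n}| * dim D)%N by [].
rewrite !dE !card_prod !card_ord -!mulnA leq_pmul2r //.
by rewrite muln_gt0 n0 dimD_gt0.
Qed.
End Rank.
Section NS.
Variables (F : fieldType) (D : falgType F) (bar : D -> D) (n : nat).
Hypothesis barD : forall x y, bar (x + y) = bar x + bar y.
Hypothesis barM : forall x y, bar (x * y) = bar y * bar x.
Hypothesis barK : involutive bar.

Lemma bar0 : bar 0 = 0.
Proof. by apply/(addrI (bar 0)); rewrite -barD !addr0. Qed.

Lemma barS (I : Type) (r : seq I) (P : pred I) (G : I -> D) :
  bar (\sum_(i <- r | P i) G i) = \sum_(i <- r | P i) bar (G i).
Proof. exact: (big_morph bar barD bar0). Qed.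

Lemma ctE p q (A : 'M[D]_(p, q)) i j : ct bar A i j = bar (A j i).
Proof. by rewrite /ct !mxE. Qed.

Lemma ctM p q r (A : 'M[D]_(p, q)) (B : 'M[D]_(q, r)) :
  ct bar (A *m B) = ct bar B *m ct bar A.
Proof.
apply/matrixP=> i j; rewrite ctE !mxE barS; apply: eq_bigr => k _.
by rewrite barM !ctE.
Qed.

Lemma ctD p q (A B : 'M[D]_(p, q)) : ct bar (A + B) = ct bar A + ct bar B.
Proof. by apply/matrixP=> i j; rewrite /ct !mxE barD. Qed.

Lemma ctK p q (A : 'M[D]_(p, q)) : ct bar (ct bar A) = A.
Proof. by apply/matrixP=> i j; rewrite !ctE barK. Qed.

Lemma hc_nsh (c : D) : (0 < n)%N -> c \is a GRing.unit -> bar c = c ->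
  nsh_form bar (hc bar n c).
Proof.
move=> n0 cU barc; split.
- split => /=.
  + by move=> x1 x2 y; rewrite ctD mulmxDl.
  + by move=> x y1 y2; rewrite scalerDr mulmxDr.
  + by move=> x y a b; rewrite ctM scalemxAl !mulmxA.
- move=> x y /=; apply/matrixP=> i j.
  rewrite /ct !mxE.
  rewrite barS; apply: eq_bigr => k _; rewrite !mxE !barM barK barc mulrA. by [].
- rewrite /is_nonsingular /= => f [fD fM].
  pose i0 := Ordinal n0.
  pose e : 'M[D]_(1, n) := delta_mx 0 i0.
  pose x : 'M[D]_(1, n) := \row_i bar (f e i i0 * c^-1).
  have fe i j : f e i j = f e i i0 * (j == i0)%:R.
    have ee : e *m delta_mx i0 i0 = e by rewrite /e mul_delta_mx.
    rewrite -{1}ee fM !mxE (bigD1 i0) //= big1 ?addr0.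
      by rewrite !mxE eqxx /= eq_sym.
    by move=> k /negPf nk; rewrite !mxE nk mulr0.
  have Hx : ct bar x *m (c *: e) = f e.
    apply/matrixP=> i j; rewrite !mxE big_ord1 fe ctE !mxE barK.
    by rewrite eqxx /= mulrA divrK // eq_sym.
  have yE (y : 'M[D]_(1, n)) : y = e *m (\matrix_(i, j) ((i == i0)%:R * y 0 j)).
    apply/matrixP=> i j; rewrite !mxE (bigD1 i0) //= big1 ?addr0.
      by rewrite !mxE eqxx mul1r ord1 !eqxx mul1r.
    by move=> k /negPf nk; rewrite !mxE nk andbF mul0r.
  exists x; split.
    by move=> y; rewrite [in RHS](yE y) fM [in LHS](yE y) scalemxAl mulmxA Hx.
  move=> x' Hx'; have := Hx' e; rewrite -Hx => /matrixP H.
  apply/matrixP=> i j; rewrite ord1.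
  have := H j i0; rewrite !mxE !big_ord1 !ctE !mxE eqxx /= !mulr1.
  by move/(mulIr cU)/(can_inj barK).
Qed.
End NS.

Section Ortho.
Variables (F : fieldType) (D : falgType F) (bar : D -> D) (n : nat).
Hypothesis barD : forall x y, bar (x + y) = bar x + bar y.

Lemma usubD m1 m2 (x y : 'M[D]_(m1 + m2, n)) : usubmx (x + y) = usubmx x + usubmx y.
Proof. by apply/matrixP=> i j; rewrite !mxE. Qed.
Lemma dsubD m1 m2 (x y : 'M[D]_(m1 + m2, n)) : dsubmx (x + y) = dsubmx x + dsubmx y.
Proof. by apply/matrixP=> i j; rewrite !mxE. Qed.

Lemma hfun_x0 (h : hform D n) : is_sesquilinear bar h -> forall x, hfun (h:=h) x 0 = 0.
Proof.
case=> _ hD _ x; apply/(addrI (hfun x 0)).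
by rewrite -hD !addr0.
Qed.

Lemma hfun_0x (h : hform D n) : is_sesquilinear bar h -> forall x, hfun (h:=h) 0 x = 0.
Proof.
case=> hD _ _ x; apply/(addrI (hfun 0 x)).
by rewrite -hD !addr0.
Qed.

Lemma ortho_nsh (h1 h2 : hform D n) : nsh_form bar h1 -> nsh_form bar h2 ->
  nsh_form bar (Defs.ortho h1 h2).
Proof.
case=> [[s1D s1D' s1M] H1 N1] [[s2D s2D' s2M] H2 N2]; split.
- split => /=.
  + by move=> x1 x2 y; rewrite usubD dsubD s1D s2D addrACA.
  + by move=> x y1 y2; rewrite usubD dsubD s1D' s2D' addrACA.
  + move=> x y a b; rewrite -!mul_usub_mx -!mul_dsub_mx s1M s2M.
    by rewrite mulmxDr mulmxDl.
- move=> x y /=; rewrite H1 H2.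
  by apply/matrixP=> i j; rewrite /ct !mxE barD.
- rewrite /is_nonsingular /= => f [fD fM].
  pose f1 := fun u => f (col_mx u 0).
  pose f2 := fun v => f (col_mx 0 v).
  have r1 : rlinear f1.
    split=> [u v|u a]; rewrite /f1.
      by rewrite -fD add_col_mx addr0.
    by rewrite -fM mul_col_mx mul0mx.
  have r2 : rlinear f2.
    split=> [u v|u a]; rewrite /f2.
      by rewrite -fD add_col_mx addr0.
    by rewrite -fM mul_col_mx mul0mx.
  have [x1 [Hx1 U1]] := N1 f1 r1.
  have [x2 [Hx2 U2]] := N2 f2 r2.
  exists (col_mx x1 x2); split.
    move=> y; rewrite col_mxKu col_mxKd Hx1 Hx2 /f1 /f2 -fD add_col_mx.
    by rewrite addr0 add0r vsubmxK.
  move=> x' Hx'.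
  rewrite -[x']vsubmxK; congr col_mx.
    apply: U1 => u; rewrite /f1 -Hx' col_mxKu col_mxKd hfun_x0 ?addr0 //.
  by apply: U2 => u; rewrite /f2 -Hx' col_mxKu col_mxKd hfun_x0 ?add0r //.
Qed.
End Ortho.

Lemma hrank_famF (F : fieldType) (D : falgType F) (bar : D -> D) n a i s :
  hrank (famF bar n a i s) = (size s).+1.
Proof. by elim: s i => [|j s IH] i //=; rewrite IH. Qed.

Lemma witt_odd (F : fieldType) (D : falgType F) (bar : D -> D) n (h h' : hform D n) :
  (0 < n)%N -> witt_equiv bar h h' -> odd (hrank h) = odd (hrank h').
Proof.
move=> n0 [m1 [m2 [g [gB [gD gM] _]]]].
have [g' gK g'K] := gB.
have le1 := @rank_le _ _ _ _ _ g n0 (conj gD gM) (bij_inj gB).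
have r' : rlinear g'.
  split=> [x y|x a].
    by apply: (bij_inj gB); rewrite gD !g'K.
  by apply: (bij_inj gB); rewrite gM !g'K.
have le2 := @rank_le _ _ _ _ _ g' n0 r' (can_inj g'K).
have E : hrank (Defs.ortho h (hyp bar n m1)) = hrank (Defs.ortho h' (hyp bar n m2)) by apply/eqP; rewrite eqn_leq le1 le2.
by move: (congr1 odd E) => /=; rewrite !oddD !addbb !addbF. 
Qed.

Theorem mainTheorem14 (F : fieldType) (D : falgType F) (bar : D -> D) (n : nat)
  (a : D) (i1 : nat) (s1 : seq nat) (i2 : nat) (s2 : seq nat) :
  formally_real F ->
  division_algebra_with_involution bar ->
  (0 < n)%N ->
  bar a = a -> a \is a GRing.unit ->
  in_I bar (boxF bar n a i1 s1 i2 s2) ->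
  in_I bar (famF bar n a i1 s1) \/ in_I bar (famF bar n a i2 s2).
Proof.
move=> _ [_ _ [barD barM] barK _] n0 bara aU [h' [_ ev W]].
have bar1 : bar 1 = 1.
  by have := barM 1 (bar 1); rewrite mul1r !barK mul1r.
have barX i : bar (a ^+ i) = a ^+ i.
  elim: i => [|i IH]; first by rewrite expr0.
  by rewrite [in LHS]exprS barM IH bara -exprSr.
have famN i s : nsh_form bar (famF bar n a i s).
  elim: s i => [|j s IH] i /=.
    by apply: hc_nsh => //; rewrite unitrX.
  apply: ortho_nsh => //.
  by apply: hc_nsh => //; rewrite unitrX.
have refl i s : ~~ odd (size s).+1 -> in_I bar (famF bar n a i s).
  move=> evs; exists (famF bar n a i s); split => //; first by rewrite hrank_famF.
  exists 0%N, 0%N, id; split => //.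
  by exists id.
have := @witt_odd _ _ _ _ _ _ n0 W; rewrite (negbTE ev).
rewrite /boxF hrank_famF.
set p := [seq _ | _ <- _, _ <- _].
have -> : (size (behead p)).+1 = size p.
  by rewrite size_behead prednK // /p size_allpairs.
rewrite /p size_allpairs oddM => /negbT.
rewrite negb_and => /orP [] ev'.
  by left; apply: refl.
by right; apply: refl.
Qed.
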